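(* Let $F$ be a field and let $A$ be a unital alternative $F$-algebra. If $A$ is finite-dimensional or reversible, then $A$ is von-Neumann finite.
   Context: An $F$-algebra is a vector space $A$ over $F$ with a bilinear multiplication $A\times A\to A$, not necessarily associative; unital means there is $1\in A$ with $1a=a1=a$ for all $a$. $A$ is alternative if $a^2b=a(ab)$ and $ab^2=(ab)b$ for all $a,b\in A$. $A$ is von-Neumann finite if for all $a,b\in A$, $ab=1$ implies $ba=1$. $A$ is reversible if for all $a,b\in A$, $ab=0$ implies $ba=0$. *)

(* Defs.v *)
From HB Require Import structures.
From mathcomp Require Import all_boot all_algebra.
Set Implicit Arguments. Unset Strict Implicit. Unset Printing Implicit Defensive.
Import GRing.Theory.
Local Open Scope ring_scope.

Definition bilinear_mul (F : fieldType) (A : lmodType F) (mul : A -> A -> A) :=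
  (forall (k : F) (x y z : A), mul (k *: x + y) z = k *: mul x z + mul y z) /\
  (forall (k : F) (x y z : A), mul x (k *: y + z) = k *: mul x y + mul x z).

Definition unital_with (A : Type) (mul : A -> A -> A) (one : A) :=
  forall a, mul one a = a /\ mul a one = a.

Definition alternative (A : Type) (mul : A -> A -> A) :=
  forall a b, mul (mul a a) b = mul a (mul a b) /\ mul a (mul b b) = mul (mul a b) b.

Definition vN_finite (A : Type) (mul : A -> A -> A) (one : A) :=
  forall a b, mul a b = one -> mul b a = one.

Definition reversible (F : fieldType) (A : lmodType F) (mul : A -> A -> A) :=
  forall a b, mul a b = 0 -> mul b a = 0.

Definition finite_dim (F : fieldType) (A : lmodType F) :=
  exists s : seq A, forall v : A,
    exists c : 'I_(size s) -> F, v = \sum_(i < size s) c i *: s`_i.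

(* Main.v *)
Require Import Defs.
From mathcomp Require Import all_boot all_algebra.
Set Implicit Arguments. Unset Strict Implicit. Unset Printing Implicit Defensive.
Import GRing.Theory.
Local Open Scope ring_scope.

Lemma dep (F : fieldType) (A : lmodType F) (s : seq A)
  (Hs : forall v : A, exists c : 'I_(size s) -> F, v = \sum_(i < size s) c i *: s`_i)
  (w : 'I_(size s).+1 -> A) :
  exists v : 'I_(size s).+1 -> F, (exists i, v i != 0) /\ \sum_i v i *: w i = 0.
Proof.
have [C HC] := fin_all_exists (fun i => Hs (w i)).
pose M : 'M[F]_((size s).+1, size s) := \matrix_(i, j) C i j.
pose K := kermx M.
have rK : \rank K != 0%N.
  rewrite /K mxrank_ker -lt0n subn_gt0 ltnS. exact: rank_leq_col.
have KN0 : K != 0 by apply: contra rK => /eqP ->; rewrite mxrank0.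
have : [exists i, exists j, K i j != 0].
  apply: contraR KN0 => /existsPn H. apply/eqP/matrixP => i j.
  rewrite [RHS]mxE. have := H i. move/existsPn/(_ j). by rewrite negbK => /eqP.
case/existsP => i /existsP [j Hij].
exists (fun k => K i k); split; first by exists j.
have KM : forall l, \sum_k K i k * C k l = 0.
  move=> l. have := congr1 (fun X : 'M[F]_((size s).+1, size s) => X i l) (mulmx_ker M).
  rewrite !mxE /= => h; rewrite -[RHS]h. apply: eq_bigr => k _. by rewrite /M mxE.
under eq_bigr => k _ do rewrite (HC k) scaler_sumr.
rewrite exchange_big /=.
apply: big1 => l _.
under eq_bigr => k _ do rewrite scalerA.
by rewrite -scaler_suml KM scale0r.
Qed.

Section Alt.
Variables (F : fieldType) (A : lmodType F) (mul : A -> A -> A) (one : A).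
Hypothesis (Hbil : bilinear_mul mul) (Hun : unital_with mul one) (Halt : alternative mul).

Lemma mulDl x y z : mul (x + y) z = mul x z + mul y z.
Proof. by have := (Hbil.1 1 x y z); rewrite !scale1r. Qed.
Lemma mulDr x y z : mul x (y + z) = mul x y + mul x z.
Proof. by have := (Hbil.2 1 x y z); rewrite !scale1r. Qed.
Lemma mul0l z : mul 0 z = 0.
Proof. have h := mulDl 0 0 z; rewrite addr0 in h. by apply: (addrI (mul 0 z)); rewrite addr0 -h. Qed.
Lemma mul0r z : mul z 0 = 0.
Proof. have h := mulDr z 0 0; rewrite addr0 in h. by apply: (addrI (mul z 0)); rewrite addr0 -h. Qed.
Lemma mulZl k x z : mul (k *: x) z = k *: mul x z.
Proof. by have := (Hbil.1 k x 0 z); rewrite !addr0 mul0l addr0. Qed.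
Lemma mulZr k x z : mul x (k *: z) = k *: mul x z.
Proof. by have := (Hbil.2 k x z 0); rewrite !addr0 mul0r addr0. Qed.
Lemma mulNl x z : mul (- x) z = - mul x z.
Proof. by rewrite -scaleN1r mulZl scaleN1r. Qed.
Lemma mulNr x z : mul x (- z) = - mul x z.
Proof. by rewrite -scaleN1r mulZr scaleN1r. Qed.
Lemma mulBl x y z : mul (x - y) z = mul x z - mul y z.
Proof. by rewrite mulDl mulNl. Qed.
Lemma mulBr x y z : mul x (y - z) = mul x y - mul x z.
Proof. by rewrite mulDr mulNr. Qed.

Definition asc x y z := mul (mul x y) z - mul x (mul y z).

Lemma ascDl x x' y z : asc (x + x') y z = asc x y z + asc x' y z.
Proof. by rewrite /asc !mulDl opprD addrACA. Qed.
Lemma ascDm x y y' z : asc x (y + y') z = asc x y z + asc x y' z.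
Proof. by rewrite /asc !(mulDl, mulDr) opprD addrACA. Qed.
Lemma ascDr x y z z' : asc x y (z + z') = asc x y z + asc x y z'.
Proof. by rewrite /asc !mulDr opprD addrACA. Qed.

Lemma asc_xxz x z : asc x x z = 0.
Proof. by rewrite /asc (Halt x z).1 subrr. Qed.
Lemma asc_xzz x z : asc x z z = 0.
Proof. by rewrite /asc (Halt x z).2 subrr. Qed.

Lemma asc_swap12 x y z : asc y x z = - asc x y z.
Proof.
have := asc_xxz (x + y) z.
rewrite ascDl !ascDm !asc_xxz add0r addr0 => /eqP; rewrite addr_eq0 => /eqP ->.
by rewrite opprK.
Qed.
Lemma asc_swap23 x y z : asc x z y = - asc x y z.
Proof.
have := asc_xzz x (y + z).
rewrite ascDr !ascDm !asc_xzz add0r addr0 => /eqP; rewrite addr_eq0 => /eqP ->.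
by [].
Qed.
Lemma asc_flex x y : asc x y x = 0.
Proof. by rewrite asc_swap23 asc_xxz oppr0. Qed.

Lemma teich w x y z :
  asc (mul w x) y z - asc w (mul x y) z + asc w x (mul y z) =
  mul w (asc x y z) + mul (asc w x y) z.
Proof.
rewrite /asc mulBr mulBl.
set p := mul (mul (mul w x) y) z; set q := mul (mul w x) (mul y z).
set r := mul (mul w (mul x y)) z; set s := mul w (mul (mul x y) z).
set t := mul w (mul x (mul y z)).
rewrite opprB -addrA (addrC (s - r)) addrA subrKA addrACA [RHS]addrACA (addrC p).
by [].
Qed.

Lemma asc_one3 x y : asc x y one = 0.
Proof. by rewrite /asc !(Hun _).2 subrr. Qed.
Lemma asc_one1 x y : asc one x y = 0.
Proof. by rewrite /asc !(Hun _).1 subrr. Qed.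
Lemma ascNl x y z : asc (- x) y z = - asc x y z.
Proof. by rewrite /asc !mulNl opprD. Qed.
Lemma ascZl k x y z : asc (k *: x) y z = k *: asc x y z.
Proof. by rewrite /asc !mulZl scalerBr. Qed.
Lemma asc0l y z : asc 0 y z = 0.
Proof. by rewrite /asc !mul0l subrr. Qed.

Lemma step y a : (forall z, asc y a z = 0) -> forall z, asc (mul y a) a z = 0.
Proof.
move=> H z.
have := teich y a z a.
rewrite !H asc_flex mul0r mul0l !addr0 => /eqP; rewrite subr_eq0 => /eqP E.
by rewrite -[LHS]opprK -asc_swap23 E asc_swap23 opprK H.
Qed.

Lemma key_rev a b : mul a b = one -> asc (mul b a) a b = 0.
Proof.
move=> ab.
have := teich b a a b.
rewrite asc_xxz asc_xzz mul0r mul0l addr0 asc_flex subr0 ab asc_one3 addr0.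
by [].
Qed.

Lemma rev_case a b : reversible mul -> mul a b = one -> mul b a = one.
Proof.
move=> Hr ab.
have aea : mul a (mul b a) = a.
  have := asc_flex a b; rewrite /asc ab (Hun a).1 => /eqP; rewrite subr_eq0 => /eqP <-. by [].
have h1 : mul a (one - mul b a) = 0 by rewrite mulBr (Hun a).2 aea subrr.
have h2 := Hr _ _ h1.
have : one - mul b a = 0.
  have E : mul (one - mul b a) (mul a b) = mul (mul (one - mul b a) a) b - asc (one - mul b a) a b.
    by rewrite /asc opprB [RHS]addrC subrK.
  rewrite ab (Hun _).2 in E. rewrite E h2 mul0l sub0r ascDl ascNl asc_one1 key_rev // oppr0 addr0 oppr0.
  by [].
by move/eqP; rewrite subr_eq0 => /eqP <-.
Qed.

Fixpoint E (a : A) (s : seq F) : A :=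
  match s with [::] => 0 | c :: s' => c *: one + mul (E a s') a end.

Lemma E_asc a s z : asc (E a s) a z = 0.
Proof.
elim: s z => [|c s IH] z /=; first by rewrite asc0l.
by rewrite ascDl ascZl asc_one1 scaler0 add0r step.
Qed.

Lemma key_fd a b s : mul a b = one -> E a s = 0 -> has (fun c => c != 0) s ->
  exists g, mul g a = one /\ asc g a b = 0.
Proof.
move=> ab; elim: s => [|c s IH] //= Es.
case: (eqVneq c 0) => [c0|c0] /= hs.
  subst c. apply: IH => //.
  have E0 : mul (E a s) a = 0 by move: Es; rewrite scale0r add0r.
  have : mul (E a s) (mul a b) = mul (mul (E a s) a) b - asc (E a s) a b.
    by rewrite /asc opprB [RHS]addrC subrK.
  by rewrite ab (Hun _).2 E0 mul0l E_asc subrr.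
exists (- c^-1 *: E a s); split; last by rewrite ascZl E_asc scaler0.
have : mul (E a s) a = - (c *: one).
  by apply/eqP; rewrite -addr_eq0 addrC Es.
by rewrite mulZl => ->; rewrite scalerN scaleNr opprK scalerA mulVf // scale1r.
Qed.


Definition pw a i := iter i (fun y => mul y a) one.

Lemma mul_suml n (f : 'I_n -> A) z : mul (\sum_(i < n) f i) z = \sum_(i < n) mul (f i) z.
Proof. by rewrite (big_morph (fun x => mul x z) (fun x y => mulDl x y z) (mul0l z)). Qed.

Lemma E_sum a s : E a s = \sum_(i < size s) s`_i *: pw a i.
Proof.
elim: s => [|c s IH] /=; first by rewrite big_ord0.
rewrite big_ord_recl /= IH mul_suml. congr (_ + _).
apply: eq_bigr => i _. by rewrite mulZl.
Qed.

Lemma main_sec : (finite_dim A \/ reversible mul) -> vN_finite mul one.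
Proof.
move=> [[s Hs]|Hr] a b ab; last exact: rev_case.
have [v [[i vi] Hv]] := dep Hs (fun i => pw a i).
pose l := mkseq (fun k => v (inord k)) (size s).+1.
have El : E a l = 0.
  rewrite E_sum size_mkseq -[RHS]Hv; apply: eq_bigr => k _.
  by rewrite nth_mkseq // inord_val.
have hl : has (fun c => c != 0) l.
  apply/hasP; exists l`_i; first by apply: mem_nth; rewrite size_mkseq.
  by rewrite nth_mkseq // inord_val.
have [g [ga gb]] := key_fd ab El hl.
have Hg : g = b.
  have : mul (mul g a) b = asc g a b + mul g (mul a b).
    by rewrite /asc subrK.
  by rewrite ga ab (Hun _).1 (Hun _).2 gb add0r => ->.
by rewrite -Hg.
Qed.
End Alt.

Theorem proposition4p1 (F : fieldType) (A : lmodType F)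
  (mul : A -> A -> A) (one : A) :
  bilinear_mul mul -> unital_with mul one -> alternative mul ->
  (finite_dim A \/ reversible mul) ->
  vN_finite mul one.
Proof. move=> Hb Hu Ha; exact: main_sec. Qed.
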